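(* Consider $m$ shoes and a partition of the generic shoe sole into $J$ subsets $A_1,\dots,A_J$. For shoe $i$ and subset $j$, let $S_{ij}\ge 0$ be the area of the contact surface of shoe $i$ in $A_j$, and let $n_{ij}\in\{0,1,2,\dots\}$ be the observed number of randomly acquired characteristics (RACs) of shoe $i$ in $A_j$. Write $n_i=\sum_{j} n_{ij}$ and $n_{\cdot j}=\sum_{i=1}^m n_{ij}$. The model is: $a_1,\dots,a_m$ are i.i.d. positive random variables with $E(a_i)=1$ and density $h_\theta$ from a family indexed by $\theta$, and conditionally on $a_i$ the counts $N_{i1},\dots,N_{iJ}$ are independent with $N_{ij}\mid a_i\sim \mathrm{Poisson}(\lambda_j S_{ij} a_i)$, where $\lambda_1,\dots,\lambda_J>0$ are unknown. Consider the following three estimators of $(\lambda_1,\dots,\lambda_J)$: (i) the naive estimator $\hat\lambda_j=\frac{1}{|m_j|}\sum_{i\in m_j}\frac{n_{ij}}{S_{ij}}$, where $m_j=\{i: S_{ij}>0\}$; (ii) the random effects estimator: $(\hat\lambda_1,\dots,\hat\lambda_J)$ together with $\hat\theta$ maximize $$L(\lambda_1,\dots,\lambda_J,\theta)=\prod_{i=1}^m\int\prod_{j=1}^J\frac{e^{-\lambda_j a S_{ij}}(\lambda_j a S_{ij})^{n_{ij}}}{n_{ij}!}\,h_\theta(a)\,da;$$ (iii) the conditional maximum likelihood (CML) estimator: $(\hat\lambda_1,\dots,\hat\lambda_J)$ with positive entries solving, for every $k=1,\dots,J$, $$\sum_{i=1}^m\left[\frac{n_{ik}}{\hat\lambda_k}-\frac{n_i}{\sum_{j'}S_{ij'}\hat\lambda_{j'}}S_{ik}\right]=0$$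 (these are the score equations of the conditional log-likelihood $\sum_i\sum_j n_{ij}[\log\lambda_j+\log S_{ij}-\log(\sum_{j'}S_{ij'}\lambda_{j'})]$, obtained by conditioning on $N_i=n_i$; this determines $\lambda$ only up to a positive multiplicative constant). If $S_{ij}=S_j$ for all $i,j$ (all shoes have the same contact surface areas in each subset), with $S_j>0$ for all $j$, then for each of the three estimators, $$\frac{\hat\lambda_j}{\hat\lambda_k}=\frac{n_{\cdot j}}{n_{\cdot k}}\cdot\frac{S_k}{S_j}$$ for any $j,k$ with $n_{\cdot k}>0$.
   Context: RACs are randomly acquired characteristics (e.g. scratches, holes) on shoe soles; $a_i$ models the degree of wear and tear of shoe $i$. The CML estimator is defined only up to a common positive scale, but the ratios $\hat\lambda_j/\hat\lambda_k$ are well defined. *)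

(* Defs.v *)
From HB Require Import structures.
From mathcomp Require Import all_boot all_order all_algebra.
From mathcomp Require Import all_classical all_reals all_analysis.
Set Implicit Arguments. Unset Strict Implicit. Unset Printing Implicit Defensive.
Import Order.TTheory GRing.Theory Num.Theory.
Local Open Scope ring_scope.
Local Open Scope classical_set_scope.

Section Shoes.
Variables (R : realType) (m J : nat).
Variables (S : 'I_m -> 'I_J -> R) (n : 'I_m -> 'I_J -> nat).

Definition n_row (i : 'I_m) : nat := (\sum_(j < J) n i j)%N.
Definition n_col (j : 'I_J) : nat := (\sum_(i < m) n i j)%N.

Definition naive_est (j : 'I_J) : R :=
  (#|[set i : 'I_m | 0 < S i j]|%:R)^-1 *
  \sum_(i < m | 0 < S i j) (n i j)%:R / S i j.

Definition poisson_prod (lam : 'I_J -> R) (i : 'I_m) (a : R) : R :=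
  \prod_(j < J)
    (expR (- (lam j * a * S i j)) * (lam j * a * S i j) ^+ n i j
       / ((n i j)`!)%:R).

Definition RE_lik (Theta : Type) (h : Theta -> R -> R)
  (lam : 'I_J -> R) (theta : Theta) : R :=
  \prod_(i < m)
    fine (\int[@lebesgue_measure R]_(a in [set x : R | (0 < x)%R])
             (poisson_prod lam i a * h theta a)%:E).

Definition is_RE_est (Theta : Type) (h : Theta -> R -> R)
  (lam : 'I_J -> R) (theta : Theta) : Prop :=
  (forall j, 0 < lam j) /\
  (forall (lam' : 'I_J -> R) (theta' : Theta), (forall j, 0 < lam' j) ->
     RE_lik h lam' theta' <= RE_lik h lam theta).

Definition is_CML_est (lam : 'I_J -> R) : Prop :=
  (forall j, 0 < lam j) /\
  (forall k : 'I_J,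
     \sum_(i < m) ((n i k)%:R / lam k
        - (n_row i)%:R / (\sum_(j' < J) S i j' * lam j') * S i k) = 0).
End Shoes.

Definition is_mean1_pos_density (R : realType) (f : R -> R) : Prop :=
  measurable_fun [set x : R | (0 < x)%R] f /\
  (forall a, 0 < a -> 0 <= f a) /\
  (\int[@lebesgue_measure R]_(a in [set x : R | (0 < x)%R]) (f a)%:E = 1)%E /\
  (\int[@lebesgue_measure R]_(a in [set x : R | (0 < x)%R]) (a * f a)%:E = 1)%E.

(* Main.v *)
Require Import Defs.
From HB Require Import structures.
From mathcomp Require Import all_boot all_order all_algebra.
From mathcomp Require Import all_classical all_reals all_analysis.
From mathcomp Require Import measurable_realfun lebesgue_integral.
From mathcomp Require Import ring lra.
Import Order.TTheory GRing.Theory Num.Theory.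
Local Open Scope ring_scope.
Local Open Scope classical_set_scope.

Lemma bern (R : realFieldType) (u : R) (a : nat) : -1 <= u -> 1 + a%:R * u <= (1 + u) ^+ a.
Proof.
move=> hu; elim: a => [|a IH]; first by rewrite mul0r addr0 expr0.
rewrite exprS -natr1.
have h1 : 0 <= 1 + u by lra.
have := ler_wpM2l h1 IH.
have : 0 <= a%:R * u * u.
  by rewrite -mulrA mulr_ge0 // -expr2 sqr_ge0.
nra.
Qed.

Lemma pert (R : realFieldType) (x y : R) (a b : nat) : 0 < x -> 0 < y ->
  (forall t, 0 < t < y -> (1 + t / x) ^+ a * (1 - t / y) ^+ b <= 1) ->
  a%:R / x <= b%:R / y.
Proof.
move=> x0 y0 H; rewrite leNgt; apply/negP => hlt.
set p := a%:R / x; set q := b%:R / y.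
have p0 : 0 <= p by rewrite divr_ge0 // ltW.
have q0 : 0 <= q by rewrite divr_ge0 // ltW.
set D := p - q.
have D0 : 0 < D by rewrite /D subr_gt0.
set w := D / y.
have Dy : 0 < w by rewrite divr_gt0.
have wy : w * y = D by rewrite /w mulfVK // gt_eqF.
set E := 2 * (p * q + w).
have E0 : 0 < E by rewrite /E; nra.
set t := D / E.
have t0 : 0 < t by rewrite divr_gt0.
have tE : t * E = D by rewrite /t mulfVK // gt_eqF.
have ty : t < y.
  rewrite /E in tE.
  have pq0 : 0 <= t * (p * q) by apply: mulr_ge0; [exact: ltW | exact: mulr_ge0].
  have h : 2 * t * w <= w * y by nra.
  nra.
have := H t; rewrite t0 ty => /(_ isT) Hle.
have b1 : 1 + a%:R * (t / x) <= (1 + t / x) ^+ a.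
  apply: bern; have : 0 < t / x by rewrite divr_gt0.
  lra.
have b2 : 1 + b%:R * (- (t / y)) <= (1 - t / y) ^+ b.
  apply: bern; have : t / y < 1 by rewrite ltr_pdivrMr // mul1r.
  lra.
have A0 : 0 <= 1 + a%:R * (t / x).
  have : 0 <= a%:R * (t / x) by rewrite mulr_ge0 // divr_ge0 // ltW.
  lra.
have Y0 : 0 <= (1 - t / y) ^+ b.
  apply: exprn_ge0; have : t / y < 1 by rewrite ltr_pdivrMr // mul1r.
  lra.
have h1 := ler_wpM2r Y0 b1.
have h2 := ler_wpM2l A0 b2.
have ep : a%:R * (t / x) = p * t by rewrite /p; field; rewrite gt_eqF.
have eq : b%:R * (- (t / y)) = - (q * t) by rewrite /q; field; rewrite gt_eqF.
rewrite ep eq in h1 h2 A0.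
have ptq : p * q * t < D.
  rewrite /E in tE.
  have : 0 < t * w by rewrite mulr_gt0.
  nra.
have key : (1 + p * t) * (1 - q * t) = 1 + t * (D - p * q * t) by rewrite /D; ring.
have : 0 < t * (D - p * q * t) by rewrite mulr_gt0 // subr_gt0.
rewrite key in h2.
lra.
Qed.
Lemma fac_le1 (R : realType) (y : R) (k : nat) : 0 <= y ->
  expR (- y) * y ^+ k / k`!%:R <= 1.
Proof.
move=> y0.
have hk : y ^+ k / k`!%:R <= expR y.
  case: k => [|k].
    rewrite expr0 fact0 divr1; have := expR_ge1Dx y; lra.
  have := expR_ge1Dxn k y0; lra.
rewrite expRN -mulrA mulrC ler_pdivrMr ?expR_gt0 // mul1r.
exact: hk.
Qed.

Lemma Dmeas (R : realType) : measurable [set x : R | 0 < x].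
Proof.
have -> : [set x : R | 0 < x] = `]0, +oo[%classic.
  by apply/seteqP; split => x /=; rewrite in_itv /= andbT.
exact: measurable_itv.
Qed.

Section PP.
Variables (R : realType) (m J : nat) (S : 'I_m -> 'I_J -> R) (n : 'I_m -> 'I_J -> nat).

Lemma pp_bounds (lam : 'I_J -> R) i a : (forall j, 0 < lam j) -> (forall j, 0 < S i j) ->
  0 < a -> 0 < poisson_prod S n lam i a <= 1.
Proof.
move=> l0 s0 a0; apply/andP; split.
  apply: prodr_gt0 => j _.
  rewrite divr_gt0 ?ltr0n ?fact_gt0 // mulr_gt0 ?expR_gt0 // exprn_gt0 //.
  by rewrite !mulr_gt0.
apply: prodr_ile1 => j _; apply/andP; split.
  rewrite divr_ge0 ?ler0n // mulr_ge0 ?expR_ge0 // exprn_ge0 //.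
  by rewrite !mulr_ge0 // ltW.
by apply: fac_le1; rewrite !mulr_ge0 // ltW.
Qed.

Lemma pp_meas (lam : 'I_J -> R) i (D : set R) :
  measurable_fun D (fun a => poisson_prod S n lam i a).
Proof.
rewrite /poisson_prod.
apply: measurable_prod => j _.
apply: measurable_realfun.measurable_funM; last exact: measurable_cst.
apply: measurable_realfun.measurable_funM.
  apply: measurableT_comp; first exact: measurable_realfun.measurable_expR.
  apply: measurable_realfun.measurable_funN.
  apply: measurable_realfun.measurable_funM; last exact: measurable_cst.
  apply: measurable_realfun.measurable_funM; first exact: measurable_cst.
  exact: measurable_id.
apply: measurable_realfun.measurable_funX.
apply: measurable_realfun.measurable_funM; last exact: measurable_cst.
apply: measurable_realfun.measurable_funM; first exact: measurable_cst.
exact: measurable_id.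
Qed.

Lemma int_props (h : R -> R) (lam : 'I_J -> R) i : is_mean1_pos_density h ->
  (forall j, 0 < lam j) -> (forall j, 0 < S i j) ->
  let I := (\int[@lebesgue_measure R]_(a in [set x : R | (0 < x)%R])
             (poisson_prod S n lam i a * h a)%:E)%E in
  I \is a fin_num /\ 0 < fine I.
Proof.
move=> [mh [h0 [ih1 _]]] l0 s0 I.
set D := [set x : R | 0 < x].
have mD := Dmeas R.
have mf : measurable_fun D (fun a => poisson_prod S n lam i a * h a).
  exact: measurable_realfun.measurable_funM (pp_meas lam i D) mh.
have mfE : measurable_fun D (EFin \o (fun a => poisson_prod S n lam i a * h a)).
  exact/measurable_realfun.measurable_EFinP.
have f0 : forall x, D x -> (0 <= (poisson_prod S n lam i x * h x)%:E)%E.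
  move=> x Dx; rewrite lee_fin mulr_ge0 // ?h0 //.
  by case/andP: (pp_bounds lam i x l0 s0 Dx) => /ltW.
have Ile1 : (I <= 1)%E.
  rewrite -ih1; apply: ge0_le_integral => //.
  all: try (exact/measurable_realfun.measurable_EFinP).
  move=> x Dx; rewrite lee_fin ler_piMl ?h0 //.
  by case/andP: (pp_bounds lam i x l0 s0 Dx).
have I0 : (0 <= I)%E by apply: integral_ge0.
have Ine0 : I != 0%E.
  apply/negP => /eqP I0'.
  have : (\int[@lebesgue_measure R]_(x in D) `|(poisson_prod S n lam i x * h x)%:E| = 0)%E.
    by rewrite -I0'; apply: eq_integral => x Dx; rewrite gee0_abs // f0 //; exact: set_mem.
  move=> Hab; have := @ae_eq_integral_abs _ _ _ (@lebesgue_measure R) D mD _ mfE.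
  case => /(_ Hab) [N [mN N0 sub]] _.
  have : (\int[@lebesgue_measure R]_(x in D) (h x)%:E = 0)%E.
    rewrite (ae_eq_integral (cst 0%E)) //; first exact: integral0.
    - exact/measurable_realfun.measurable_EFinP.
    - exists N; split => // x /= nx; apply: sub => /=.
      apply: contra_not nx => H Dx; have := H Dx => /= /eqP.
      rewrite eqe mulf_eq0 => /orP[/eqP pp0|/eqP ->] //.
      by case/andP: (pp_bounds lam i x l0 s0 Dx); rewrite pp0 ltxx.
  by rewrite ih1 => /eqP; rewrite onee_eq0.
have Ifin : I \is a fin_num by rewrite ge0_fin_numE // (le_lt_trans Ile1) // ltey.
split => //; apply: fine_gt0; rewrite lt0e Ine0 I0 /=.
by rewrite (le_lt_trans Ile1) // ltey.
Qed.
End PP.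

Section Scale.
Variables (R : realType) (m J : nat) (S : 'I_m -> 'I_J -> R) (n : 'I_m -> 'I_J -> nat).

Lemma pp_scale (lam lam' : 'I_J -> R) i a : (forall j, lam j != 0) ->
  \sum_(j < J) lam' j * S i j = \sum_(j < J) lam j * S i j ->
  poisson_prod S n lam' i a =
  (\prod_(j < J) (lam' j / lam j) ^+ n i j) * poisson_prod S n lam i a.
Proof.
move=> l0 hs; rewrite /poisson_prod -big_split /=.
transitivity (\prod_(j < J) (expR (- ((lam' j - lam j) * a * S i j)) *
   ((lam' j / lam j) ^+ n i j * (expR (- (lam j * a * S i j)) *
      (lam j * a * S i j) ^+ n i j / ((n i j)`!)%:R)))).
  apply: eq_bigr => j _.
  have e1 : expR (- (lam' j * a * S i j)) =
      expR (- ((lam' j - lam j) * a * S i j)) * expR (- (lam j * a * S i j)).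
    by rewrite -expRD; congr expR; ring.
  have e2 : lam' j * a * S i j = (lam' j / lam j) * (lam j * a * S i j).
    by field.
  by rewrite e1 e2 exprMn; ring.
rewrite big_split /= -expR_sum.
have -> : \sum_(j < J) - ((lam' j - lam j) * a * S i j) = 0.
  rewrite sumrN.
  have -> : \sum_(j < J) (lam' j - lam j) * a * S i j =
      a * (\sum_(j < J) lam' j * S i j - \sum_(j < J) lam j * S i j).
    by rewrite -sumrB mulr_sumr; apply: eq_bigr => j _; ring.
  by rewrite hs subrr mulr0 oppr0.
by rewrite expR0 mul1r.
Qed.

Lemma fine_scale (f : R -> R) (c : R) : 0 <= c ->
  (forall x, 0 < x -> 0 <= f x) ->
  measurable_fun [set x : R | 0 < x] f ->
  (\int[@lebesgue_measure R]_(a in [set x : R | (0 < x)%R]) (f a)%:E)%E \is a fin_num ->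
  fine (\int[@lebesgue_measure R]_(a in [set x : R | (0 < x)%R]) (c * f a)%:E)%E =
  c * fine (\int[@lebesgue_measure R]_(a in [set x : R | (0 < x)%R]) (f a)%:E)%E.
Proof.
move=> c0 f0 mf fin.
have mfE : measurable_fun [set x : R | 0 < x] (EFin \o f).
  exact/measurable_realfun.measurable_EFinP.
have f0E : forall x, [set x : R | 0 < x] x -> (0 <= (f x)%:E)%E.
  by move=> x /= x0; rewrite lee_fin f0.
under eq_integral do rewrite EFinM.
rewrite ge0_integralZl_EFin //; last first.
  exact: Dmeas.
by rewrite fineM.
Qed.

Lemma RE_scale (Theta : Type) (h : Theta -> R -> R) (lam lam' : 'I_J -> R) theta :
  is_mean1_pos_density (h theta) ->
  (forall j, 0 < lam j) -> (forall j, 0 < lam' j) -> (forall i j, 0 < S i j) ->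
  (forall i, \sum_(j < J) lam' j * S i j = \sum_(j < J) lam j * S i j) ->
  RE_lik S n h lam' theta =
  (\prod_(j < J) (lam' j / lam j) ^+ n_col n j) * RE_lik S n h lam theta.
Proof.
move=> hd l0 l0' s0 hs.
have -> : \prod_(j < J) (lam' j / lam j) ^+ n_col n j =
    \prod_(i < m) \prod_(j < J) (lam' j / lam j) ^+ n i j.
  by rewrite exchange_big; apply: eq_bigr => j _; rewrite prodrXr.
rewrite /RE_lik -big_split /=; apply: eq_bigr => i _.
have [fin _] := int_props _ _ _ S n (h theta) lam i hd l0 (s0 i).
rewrite -fine_scale //.
- congr fine; apply: eq_integral => a _.
  by rewrite (pp_scale lam lam' i a (fun j => lt0r_neq0 (l0 j)) (hs i)) mulrA.
- by apply: prodr_ge0 => j _; apply: exprn_ge0; rewrite divr_ge0 // ltW.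
- move=> x x0; rewrite mulr_ge0 //; last by case: hd => _ [+ _]; apply.
  by case/andP: (pp_bounds _ _ _ S n lam i x l0 (s0 i) x0) => /ltW.
- apply: measurable_realfun.measurable_funM (pp_meas _ _ _ S n lam i _) _.
  by case: hd.
Qed.

Lemma RE_pos (Theta : Type) (h : Theta -> R -> R) (lam : 'I_J -> R) theta :
  is_mean1_pos_density (h theta) ->
  (forall j, 0 < lam j) -> (forall i j, 0 < S i j) ->
  0 < RE_lik S n h lam theta.
Proof.
move=> hd l0 s0; apply: prodr_gt0 => i _.
by have [_ ] := int_props _ _ _ S n (h theta) lam i hd l0 (s0 i).
Qed.
End Scale.

Theorem proposition1 (R : realType) (m J : nat)
  (S : 'I_m -> 'I_J -> R) (n : 'I_m -> 'I_J -> nat) (Sj : 'I_J -> R)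
  (Theta : Type) (h : Theta -> R -> R) :
  (forall i j, S i j = Sj j) ->
  (forall j, 0 < Sj j) ->
  (forall theta, is_mean1_pos_density (h theta)) ->
  forall j k : 'I_J, (0 < n_col n k)%N ->
  [/\ naive_est S n j / naive_est S n k
        = (n_col n j)%:R / (n_col n k)%:R * (Sj k / Sj j),
      (forall lam theta, is_RE_est S n h lam theta ->
         lam j / lam k = (n_col n j)%:R / (n_col n k)%:R * (Sj k / Sj j))
    & (forall lam, is_CML_est S n lam ->
         lam j / lam k = (n_col n j)%:R / (n_col n k)%:R * (Sj k / Sj j))].
Proof.
move=> HS Sj0 hd j k ck.
have eS : S = (fun _ j => Sj j) by apply/funext => i; apply/funext => j'; exact: HS.
subst S.
have ck0 : (n_col n k)%:R != 0 :> R by rewrite pnatr_eq0 -lt0n.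
have Sj0' : forall l, Sj l != 0 by move=> l; rewrite lt0r_neq0.
split.
-
  have nE : forall l, naive_est (fun _ j => Sj j) n l = (m%:R)^-1 * ((n_col n l)%:R / Sj l).
    move=> l; rewrite /naive_est.
    have -> : #|[set i : 'I_m | 0 < Sj l]| = m.
      rewrite -[RHS]card_ord; apply: eq_card => x.
      by rewrite [RHS]inE; apply/mem_set/Sj0.
    rewrite (Sj0 l).
    by congr (_ * _); rewrite /n_col natr_sum mulr_suml.
  have m0 : m%:R != 0 :> R.
    rewrite pnatr_eq0; apply/negP => /eqP m0; move: ck; rewrite /n_col.
    by rewrite big1 // => -[i0 hi] _; exfalso; move: hi; rewrite m0.
  rewrite !nE; field.
  by rewrite m0 ck0 !Sj0'.
- move=> lam theta [l0 hmax].
  have hdt := hd theta.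
  have s0 : forall (i : 'I_m) l, 0 < Sj l by move=> _ l; exact: Sj0.
  case: (eqVneq j k) => [ejk|jk].
    rewrite ejk !divff ?mul1r ?Sj0' ?lt0r_neq0 //.
    by rewrite ltr0n.
  have kj : k != j by rewrite eq_sym.
  set x := fun l => lam l * Sj l.
  have x0 : forall l, 0 < x l by move=> l; rewrite /x mulr_gt0.
  have G : forall t, - x j < t < x k ->
      (1 + t / x j) ^+ n_col n j * (1 - t / x k) ^+ n_col n k <= 1.
    move=> t /andP [t1 t2].
    pose lam' := fun l => if l == j then lam j + t / Sj j
                          else if l == k then lam k - t / Sj k else lam l.
    have ej : lam' j = lam j + t / Sj j by rewrite /lam' eqxx.
    have ek : lam' k = lam k - t / Sj k by rewrite /lam' (negbTE kj) eqxx.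
    have eo : forall l, l != j -> l != k -> lam' l = lam l.
      by move=> l /negbTE hj /negbTE hk; rewrite /lam' hj hk.
    have l0' : forall l, 0 < lam' l.
      move=> l; case: (eqVneq l j) => [->|lj].
        rewrite ej; have : - lam j < t / Sj j.
          by rewrite ltr_pdivlMr // mulNr.
        lra.
      case: (eqVneq l k) => [->|lk]; last by rewrite eo.
      rewrite ek; have : t / Sj k < lam k by rewrite ltr_pdivrMr.
      lra.
    have hs : forall i : 'I_m, \sum_(l < J) lam' l * Sj l = \sum_(l < J) lam l * Sj l.
      move=> i; rewrite (bigD1 j) //= [RHS](bigD1 j) //=.
      rewrite [\sum_(l < J | l != j) lam' l * Sj l](bigD1 k) ?kj //.
      rewrite [\sum_(l < J | l != j) lam l * Sj l](bigD1 k) ?kj //=.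
      rewrite (eq_bigr (fun l => lam l * Sj l)); last first.
        by move=> l /andP[lj lk]; rewrite eo.
      rewrite ej ek mulrDl mulrBl !divfK ?Sj0' //.
      lra.
    have ratio : \prod_(l < J) (lam' l / lam l) ^+ n_col n l =
        (1 + t / x j) ^+ n_col n j * (1 - t / x k) ^+ n_col n k.
      rewrite (bigD1 j) //= (bigD1 k) /= ?kj // big1 ?mulr1; last first.
        by move=> l /andP[lj lk]; rewrite eo // divff ?expr1n // lt0r_neq0.
      rewrite ej ek /x; congr (_ ^+ _ * _ ^+ _); field.
        by rewrite Sj0' lt0r_neq0.
      by rewrite Sj0' lt0r_neq0.
    have := hmax lam' theta l0'.
    rewrite (@RE_scale _ _ _ _ _ _ _ lam lam' theta hdt l0 l0' s0 hs) ratio.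
    set L := RE_lik _ _ _ _ _; set F := _ * _.
    have Lp : 0 < L by apply: RE_pos.
    move=> H; rewrite -(ler_pM2r Lp) mul1r; exact: H.
  have h1 : (n_col n j)%:R / x j <= (n_col n k)%:R / x k.
    apply: (@pert _ (x j) (x k) (n_col n j) (n_col n k) (x0 j) (x0 k)) => t /andP[t1 t2].
    apply: G; apply/andP; split => //; have := x0 j; lra.
  have h2 : (n_col n k)%:R / x k <= (n_col n j)%:R / x j.
    apply: (@pert _ (x k) (x j) (n_col n k) (n_col n j) (x0 k) (x0 j)) => t /andP[t1 t2].
    have := G (- t); rewrite !mulNr opprK mulrC; apply.
    apply/andP; split; first by rewrite ltrN2.
    have := x0 k; lra.
  have eqx : (n_col n j)%:R / x j = (n_col n k)%:R / x k.
    by apply/eqP; rewrite eq_le h1 h2.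
  have -> : (n_col n j)%:R = (n_col n k)%:R / x k * x j.
    by rewrite -eqx mulfVK // lt0r_neq0.
  rewrite /x; field.
  by rewrite ck0 !Sj0' !lt0r_neq0.
-
  move=> lam [l0 hsc].
  set Lam := \sum_(j' < J) Sj j' * lam j'.
  set T := (\sum_(i < m) n_row n i)%N.
  have key : forall l, (n_col n l)%:R = lam l * (T%:R / Lam * Sj l).
    move=> l; have := hsc l; rewrite sumrB -mulr_suml -mulr_suml -natr_sum.
    move/eqP; rewrite subr_eq0 => /eqP e.
    rewrite -/(n_col n l) -mulr_suml -natr_sum -/Lam -/T in e.
    by rewrite -[LHS](mulfVK (lt0r_neq0 (l0 l))) e mulrC.
  have TL : T%:R / Lam != 0 :> R.
    apply/negP => /eqP z; move: ck0; rewrite key z mul0r mulr0 eqxx //.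
  rewrite !key; field.
  have L0 : Lam != 0 by apply: contraNneq TL => ->; rewrite invr0 mulr0.
  have T0 : T%:R != 0 :> R by apply: contraNneq TL => ->; rewrite mul0r.
  by rewrite L0 T0 !Sj0' lt0r_neq0.
Qed.
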